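(* Let $a\in[0,\infty)$ and let $\theta:[0,1]\to[0,\infty]$ and $\vartheta:[0,\infty]\to[0,1]$ be continuous and decreasing functions such that (i) $\theta(x)=\frac{a}{2}$ if and only if $x=1$, and (ii) the function $O_{\theta,\vartheta}:[0,1]^2\to[0,1]$, $O_{\theta,\vartheta}(x,y)=\vartheta(\theta(x)+\theta(y))$, is an overlap function. Then $\vartheta(x)=1$ if and only if $x\in[0,a]$.
   Context: ''Decreasing'' means non-increasing and ''increasing'' means non-decreasing. Arithmetic in $[0,\infty]$ uses $c+\infty=\infty$; continuity on $[0,\infty]$ refers to the usual topology of the extended half-line. An overlap function is a map $O:[0,1]^2\to[0,1]$ that is (O1) commutative, (O2) $O(x,y)=0$ iff $xy=0$, (O3) $O(x,y)=1$ iff $xy=1$, (O4) increasing in each variable, (O5) continuous. *)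

(* Defs.v *)
From HB Require Import structures.
From mathcomp Require Import all_boot all_order all_algebra.
From mathcomp Require Import all_classical all_reals all_analysis.
Set Implicit Arguments. Unset Strict Implicit. Unset Printing Implicit Defensive.
Import Order.TTheory GRing.Theory Num.Theory.
Import numFieldNormedType.Exports.
Local Open Scope classical_set_scope.
Local Open Scope ring_scope.

Definition unit_itv (R : realType) : set R := `[0, 1]%classic.

(** An overlap function O : [0,1]^2 -> [0,1] (given as a function R -> R -> R,
    only its values on [0,1]^2 matter). *)
Definition is_overlap (R : realType) (O : R -> R -> R) : Prop :=
  (forall x y, unit_itv x -> unit_itv y -> 0 <= O x y <= 1) /\
  (forall x y, unit_itv x -> unit_itv y -> O x y = O y x) /\
  (forall x y, unit_itv x -> unit_itv y -> (O x y = 0 <-> x * y = 0)) /\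
  (forall x y, unit_itv x -> unit_itv y -> (O x y = 1 <-> x * y = 1)) /\
  (forall x y z, unit_itv x -> unit_itv y -> unit_itv z ->
     y <= z -> O x y <= O x z /\ O y x <= O z x) /\
  {within @unit_itv R `*` @unit_itv R, continuous (fun p : R * R => O p.1 p.2)}.

(* Main.v *)
Require Import Defs.
From HB Require Import structures.
From mathcomp Require Import all_boot all_order all_algebra.
From mathcomp Require Import all_classical all_reals all_analysis.
From mathcomp Require Import ring lra.
Import Order.TTheory GRing.Theory Num.Theory.
Import numFieldNormedType.Exports.
Local Open Scope classical_set_scope.
Local Open Scope ring_scope.

Theorem proposition3p2 (R : realType) (a : R) (th : R -> \bar R) (vt : \bar R -> R) :
  0 <= a ->
  (* theta : [0,1] -> [0,oo], continuous and decreasing *)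
  (forall x, unit_itv x -> (0 <= th x)%E) ->
  {within @unit_itv R, continuous th} ->
  (forall x y, unit_itv x -> unit_itv y -> x <= y -> (th y <= th x)%E) ->
  (* vartheta : [0,oo] -> [0,1], continuous and decreasing *)
  (forall u, (0 <= u)%E -> 0 <= vt u <= 1) ->
  {within [set u : \bar R | (0 <= u)%E], continuous vt} ->
  (forall u v, (0 <= u)%E -> (0 <= v)%E -> (u <= v)%E -> vt v <= vt u) ->
  (* (i) *)
  (forall x, unit_itv x -> (th x = (a / 2)%:E <-> x = 1)) ->
  (* (ii) *)
  is_overlap (fun x y => vt (th x + th y)%E) ->
  forall u : \bar R, (0 <= u)%E -> (vt u = 1 <-> (u <= a%:E)%E).
Proof.
move=> a0 th0 thc thd vt01 vtc vtd thi O u u0; case: O => h1 [] h2 [] h3 [] O3 h5.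
have I1 : unit_itv (1 : R) by rewrite /unit_itv /= in_itv /= ler01 lexx.
have I0 : unit_itv (0 : R) by rewrite /unit_itv /= in_itv /= ler01 lexx.
have th1 : th 1 = (a / 2)%:E by apply/thi.
have vta : vt a%:E = 1.
  have := (O3 1 1 I1 I1).2 (mulr1 1).
  by rewrite th1 -EFinD; have -> : a / 2 + a / 2 = a by field.
split; last first.
  move=> ua; apply/le_anti/andP; split; first by case/andP: (vt01 u u0).
  by rewrite -{1}vta; apply: vtd => //; by rewrite lee_fin.
move=> vu1; rewrite leNgt; apply/negP => au.
suff [x [Ix x1 hx]] : exists x, [/\ unit_itv x, x != 1 & (th x + th 1%R <= u)%E].
  have s0 : (0 <= th x + th 1%R)%E by rewrite adde_ge0 // th0.
  have : vt (th x + th 1%R)%E = 1.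
    apply/le_anti/andP; split; first by case/andP: (vt01 _ s0).
    by rewrite -{1}vu1; apply: vtd.
  by move/(O3 x 1 Ix I1); rewrite mulr1; move/eqP; rewrite (negbTE x1).
case: u u0 au {vu1} => [r| |] u0 au; last first.
- by [].
- exists 0; split => //; first by rewrite eq_sym oner_neq0.
  exact: leey.
rewrite lte_fin in au.
have := (subspace_continuousP _ _).1 thc 1 I1.
move/(_ [set y | (y < (r - a / 2)%:E)%E]).
have hn : nbhs (th 1) [set y | (y < (r - a / 2)%:E)%E].
  by rewrite th1; apply: open_ereal_lt'; rewrite lte_fin; lra.
move/(_ hn) => /= /nbhs_ballP [e /= e0 He].
pose x := if (0 <= 1 - e / 2) then 1 - e / 2 else 0.
have Ix : unit_itv x.
  rewrite /unit_itv /= in_itv /= /x; case: ifPn => h; rewrite -?ltNge in h; apply/andP; split; try lra.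
have bx : ball (1:R) e x.
  rewrite -ball_normE /= /x; case: ifP => h.
    rewrite opprB addrC subrK ger0_norm; lra.
  rewrite subr0 normr1; lra.
have := He x bx Ix => /= hx.
exists x; split => //.
  by rewrite /x; case: ifPn => h; rewrite -?ltNge in h; apply/eqP; lra.
rewrite th1; apply: le_trans (_ : ((r - a / 2)%:E + (a/2)%:E <= _)%E).
  by apply: leeD2r; apply: ltW.
by rewrite -EFinD lee_fin; lra.
Qed.
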